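(* Under the hypotheses below, let $\epsilon>0$ and $$\hat\Gamma_{N_2}^{\epsilon}(\mathcal{K})=\{z\in\mathrm{Grid}(N_2):\sigma_{\inf}((\mathcal{K}-zI)\mathcal{P}_{N_2}^* )+1/N_2\le\epsilon\}.$$ Then $\hat\Gamma_{N_2}^{\epsilon}(\mathcal{K})\subset\mathrm{Sp}_{\mathrm{ap},\epsilon}(\mathcal{K})$ for every $N_2$, and $\hat\Gamma_{N_2}^{\epsilon}(\mathcal{K})\to\mathrm{Sp}_{\mathrm{ap},\epsilon}(\mathcal{K})$ in the Attouch–Wets sense as $N_2\to\infty$.
   Context: $\mathcal{H}$ is an RKHS on $\mathcal{X}$ with kernel $\mathfrak{K}$ and kernel functions $\mathfrak{K}_x$. For $F:\mathcal{X}\to\mathcal{X}$, the Koopman operator $\mathcal{K}g=g\circ F$ (domain $\{g\in\mathcal{H}:g\circ F\in\mathcal{H}\}$, a closed operator) is assumed densely defined; $\mathcal{K}^*$ is its adjoint. $\mathfrak{K}_1,\mathfrak{K}_2,\dots$ is a countable family of kernel functions whose span is a core of both $\mathcal{K}$ and $\mathcal{K}^*$; $V_n=\mathrm{span}\{\mathfrak{K}_1,\dots,\mathfrak{K}_n\}$, $\mathcal{P}_n$ the orthogonal projection onto $V_n$, $\mathcal{P}_n^*$ the inclusion $V_n\hookrightarrow\mathcal{H}$. Injection modulus $\sigma_{\inf}(T)=\inf\{\|Tg\|/\|g\|:0\ne g\in\mathcal{D}(T)\}$; $\mathrm{Sp}_{\mathrm{ap},\epsilon}(T)=\overline{\{z\in\mathbb{C}:\sigma_{\inf}(T-zI)<\epsilon\}}$.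 $\mathrm{Grid}(N)=\frac1N(\mathbb{Z}+i\mathbb{Z})\cap\{z:|z|\le N\}$. Attouch–Wets convergence of closed sets $C_n\to C$: if $C=\emptyset$, for every $m$, $C_n\cap B_m(0)=\emptyset$ for all large $n$; otherwise, for every $\delta>0$ and compact $K\subset\mathbb{C}$, for all large $n$, $C_n\cap K\subset C+B_\delta(0)$ and $C\cap K\subset C_n+B_\delta(0)$. *)

(* Defs.v *)
(* Complex numbers are [R[i]]
   (mathcomp-real-closed's complex.v) over an arbitrary [R : realType];
   the topology on C is obtained through the regular copy [R[i]^o]. *)
From HB Require Import structures.
From mathcomp Require Import all_boot all_order all_algebra.
From mathcomp Require Import all_classical all_reals all_analysis.
From mathcomp Require Import complex.
Set Implicit Arguments. Unset Strict Implicit. Unset Printing Implicit Defensive.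
Import Order.TTheory GRing.Theory Num.Theory numFieldNormedType.Exports.
Local Open Scope ring_scope.
Local Open Scope classical_set_scope.

Section KoopmanDefs.
Variable R : realType.

Definition CC : Type := (R[i])^o.

Section Hilbert.
Variable H : lmodType R[i].
Variable ip : H -> H -> R[i].

Record is_inner_product : Prop := InnerProduct {
  ip_linl : forall (a : R[i]) (u v w : H), ip (a *: u + v) w = a * ip u w + ip v w;
  ip_herm : forall u v : H, ip u v = conjc (ip v u);
  ip_ge0  : forall u : H, 0 <= ip u u;
  ip_def  : forall u : H, ip u u = 0 -> u = 0 }.

Definition hnorm (u : H) : R := Num.sqrt (complex.Re (ip u u)).

Definition hcomplete : Prop :=
  forall u : nat -> H,
    (forall e : R, 0 < e -> exists N : nat, forall m n : nat,
        (N <= m)%N -> (N <= n)%N -> hnorm (u m - u n) < e) ->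
    exists l : H, forall e : R, 0 < e -> exists N : nat, forall n : nat,
        (N <= n)%N -> hnorm (u n - l) < e.

(* injection modulus of an operator T with domain D :
   inf { ||T g|| / ||g|| : 0 <> g in D }  (= +oo if D = {0}) *)
Definition sigma_inf (D : set H) (T : H -> H) : \bar R :=
  ereal_inf [set ((hnorm (T g)) / hnorm g)%:E | g in D `&` ~` [set 0]].

Definition span_fam (f : nat -> H) : set H :=
  [set v | exists (n : nat) (c : nat -> R[i]), v = \sum_(j < n) c j *: f j].

Definition Vn (f : nat -> H) (n : nat) : set H :=
  [set v | exists c : nat -> R[i], v = \sum_(j < n) c j *: f j].

Definition dense_in_H (D : set H) : Prop :=
  forall (g : H) (e : R), 0 < e -> exists f, D f /\ hnorm (g - f) < e.

(* S is a core of the closed operator (D, T): S is contained in D and is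
   dense in D for the graph norm (i.e. the closure of T restricted to S
   is T) *)
Definition is_core (S D : set H) (T : H -> H) : Prop :=
  S `<=` D /\
  forall f, D f -> forall e : R, 0 < e ->
    exists v, S v /\ hnorm (v - f) + hnorm (T v - T f) < e.

Definition adj_dom (D : set H) (T : H -> H) : set H :=
  [set g | exists h, forall f, D f -> ip (T f) g = ip f h].
Definition adj_op (D : set H) (T : H -> H) (g : H) : H :=
  xget 0 [set h | forall f, D f -> ip (T f) g = ip f h].
End Hilbert.

Section RKHS.
Variables (X : Type) (H : lmodType R[i]) (ip : H -> H -> R[i]).
(* ev g : X -> C is the function represented by g ; kf x = kernel function K_x *)
Variables (ev : H -> X -> R[i]) (kf : X -> H).

Record is_RKHS : Prop := RKHS {
  rkhs_ip : is_inner_product ip;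
  rkhs_complete : hcomplete ip;
  ev_lin : forall (a : R[i]) (u v : H) (x : X), ev (a *: u + v) x = a * ev u x + ev v x;
  ev_inj : forall u v : H, ev u = ev v -> u = v;
  ev_repr : forall (g : H) (x : X), ev g x = ip g (kf x) }.

Variable F : X -> X.

Definition koop_dom : set H := [set g | exists h, ev h = ev g \o F].
Definition koop (g : H) : H := xget 0 [set h | ev h = ev g \o F].

Definition koop_adj_dom : set H := adj_dom ip koop_dom koop.
Definition koop_adj : H -> H := adj_op ip koop_dom koop.

Definition koop_shift (z : R[i]) (g : H) : H := koop g - z *: g.

Definition Sp_ap (eps : R) : set CC :=
  closure [set z : CC | (sigma_inf ip koop_dom (koop_shift z) < eps%:E)%E].

End RKHS.

Definition Grid (N : nat) : set CC :=
  [set z : CC | exists a b : int,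
     z = ((a%:~R +i* b%:~R)%C : R[i]) / N%:R /\ `|z| <= N%:R].

Definition AW_conv (Cn : nat -> set CC) (C : set CC) : Prop :=
  (C = set0 ->
     forall m : nat, exists n0 : nat, forall n : nat, (n0 <= n)%N ->
       Cn n `&` ball (0 : CC) m%:R = set0) /\
  (C <> set0 ->
     forall (delta : R) (K : set CC), 0 < delta -> compact K ->
       exists n0 : nat, forall n : nat, (n0 <= n)%N ->
         Cn n `&` K `<=` [set w : CC | exists2 c, C c & `|w - c| < (delta%:C)%C] /\
         C `&` K `<=` [set w : CC | exists2 c, Cn n c & `|w - c| < (delta%:C)%C]).

Definition Gamma_hat (X : Type) (H : lmodType R[i]) (ip : H -> H -> R[i])
  (ev : H -> X -> R[i]) (kf : X -> H) (F : X -> X) (xs : nat -> X)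
  (eps : R) (N : nat) : set CC :=
  [set z : CC | Grid N z /\
     (sigma_inf ip (Vn (kf \o xs) N `&` koop_dom ev F) (koop_shift ev F z)
        + (N%:R^-1)%:E <= eps%:E)%E].

End KoopmanDefs.

(* Main.v *)
Require Import Defs.
From HB Require Import structures.
From mathcomp Require Import all_boot all_order all_algebra.
From mathcomp Require Import all_classical all_reals all_analysis.
From mathcomp Require Import complex.
From mathcomp Require Import ring lra.
Import Order.TTheory GRing.Theory Num.Theory numFieldNormedType.Exports.
Set Implicit Arguments. Unset Strict Implicit. Unset Printing Implicit Defensive.
Local Open Scope ring_scope.
Local Open Scope classical_set_scope.
Local Open Scope complex_scope.
Section Hil.
Variable R : realType.
Variable H : lmodType R[i].
Variable ip : H -> H -> R[i].
Hypothesis hip : is_inner_product ip.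

Definition cn (a : R[i]) : R := Num.sqrt (complex.Re a ^+ 2 + complex.Im a ^+ 2).

Lemma cn_ge0 a : 0 <= cn a. Proof. exact: sqrtr_ge0. Qed.

Lemma normE (a : R[i]) : `|a| = (cn a)%:C.
Proof. by case: a. Qed.

Lemma ReMc (k : R) (z : R[i]) : complex.Re (k%:C * z)%C = k * complex.Re z.
Proof. case: z => a b. simpc. rewrite /=. ring. Qed.

Lemma ip0l w : ip 0 w = 0.
Proof.
have := ip_linl hip 1 0 0 w. rewrite scaler0 addr0 mul1r => /eqP.
by rewrite -subr_eq0 opprD addrA subrr sub0r oppr_eq0 => /eqP.
Qed.

Lemma ipDl u v w : ip (u + v) w = ip u w + ip v w.
Proof. by have := ip_linl hip 1 u v w; rewrite scale1r mul1r. Qed.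

Lemma ipZl a u w : ip (a *: u) w = a * ip u w.
Proof. by have := ip_linl hip a u 0 w; rewrite addr0 ip0l addr0. Qed.

Lemma ipDr u v w : ip w (u + v) = ip w u + ip w v.
Proof. by rewrite (ip_herm hip) ipDl rmorphD /= -!(ip_herm hip). Qed.

Lemma ipZr a u w : ip w (a *: u) = conjc a * ip w u.
Proof. by rewrite (ip_herm hip) ipZl rmorphM /= -!(ip_herm hip). Qed.

Lemma ip0r w : ip w 0 = 0.
Proof. by rewrite (ip_herm hip) ip0l rmorph0. Qed.

Definition qn (u : H) : R := complex.Re (ip u u).

Lemma ipuu u : ip u u = (qn u)%:C.
Proof.
have := ip_ge0 hip u. rewrite /qn. case: (ip u u) => a b.
rewrite lecE /= => /andP [/eqP -> _]. by [].
Qed.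

Lemma qn_ge0 u : 0 <= qn u.
Proof. by have := ip_ge0 hip u; rewrite ipuu lecR. Qed.

Lemma hnormE u : hnorm ip u = Num.sqrt (qn u). Proof. by []. Qed.

Lemma hnorm_ge0 u : 0 <= hnorm ip u. Proof. exact: sqrtr_ge0. Qed.

Lemma hnorm_sq u : hnorm ip u ^+ 2 = qn u.
Proof. by rewrite hnormE sqr_sqrtr // qn_ge0. Qed.

Lemma qn_eq0 u : qn u = 0 -> u = 0.
Proof. by move=> h; apply: (ip_def hip); rewrite ipuu h. Qed.

Lemma hnorm_eq0 u : hnorm ip u = 0 -> u = 0.
Proof.
move=> /eqP; rewrite hnormE sqrtr_eq0 => h; apply: qn_eq0.
by apply/eqP; rewrite eq_le h qn_ge0.
Qed.

Lemma hnorm_gt0 u : u <> 0 -> 0 < hnorm ip u.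
Proof.
move=> hu; rewrite lt_neqAle hnorm_ge0 andbT eq_sym; apply/eqP => /hnorm_eq0.
exact: hu.
Qed.

Lemma hnorm0 : hnorm ip 0 = 0.
Proof. by rewrite hnormE /qn ip0l /= sqrtr0. Qed.

Lemma qnZ a u : qn (a *: u) = cn a ^+ 2 * qn u.
Proof.
rewrite /qn ipZl ipZr ipuu /cn sqr_sqrtr; last by rewrite addr_ge0 // sqr_ge0.
case: a => a b /=. simpc. rewrite /=. ring.
Qed.

Lemma hnormZ a u : hnorm ip (a *: u) = cn a * hnorm ip u.
Proof.
rewrite !hnormE qnZ sqrtrM ?sqr_ge0 // sqrtr_sqr ger0_norm //; exact: cn_ge0.
Qed.

Lemma cnN1 : cn (-1) = 1.
Proof. by rewrite /cn /= oppr0 expr0n addr0 sqrrN expr1n sqrtr1. Qed.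

Lemma hnormN u : hnorm ip (- u) = hnorm ip u.
Proof. by rewrite -scaleN1r hnormZ cnN1 mul1r. Qed.

Lemma hnormB u v : hnorm ip (u - v) = hnorm ip (v - u).
Proof. by rewrite -hnormN opprB. Qed.

Lemma ReJ (z : R[i]) : complex.Re (conjc z) = complex.Re z.
Proof. by case: z. Qed.

Lemma qnD u v : qn (u + v) = qn u + qn v + 2 * complex.Re (ip u v).
Proof.
rewrite /qn ipDl !ipDr !raddfD /= [ip v u](ip_herm hip) ReJ. ring.
Qed.

Lemma cs_re u v : complex.Re (ip u v) <= hnorm ip u * hnorm ip v.
Proof.
set B := complex.Re (ip u v).
have [Ble0|Bgt0] := lerP B 0.
  by apply: (le_trans Ble0); rewrite mulr_ge0 // hnorm_ge0.
have [v0|vn0] := eqVneq v 0.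
  by move: Bgt0; rewrite /B v0 ip0r /= ltxx.
have Cgt0 : 0 < qn v by rewrite -hnorm_sq exprn_gt0 // hnorm_gt0 //; apply/eqP.
pose t := - B / qn v.
have := qn_ge0 (u + t%:C *: v).
rewrite qnD qnZ ipZr conjc_real ReMc -/B.
have -> : cn t%:C ^+ 2 = t ^+ 2.
  by rewrite /cn /= expr0n /= addr0 sqr_sqrtr // sqr_ge0.
rewrite /t => h.
have hAC : B ^+ 2 <= qn u * qn v.
  have e : qn u + (- B / qn v) ^+ 2 * qn v + 2 * (- B / qn v * B) = qn u - B ^+ 2 / qn v.
    field. by rewrite gt_eqF.
  move: h. rewrite e. rewrite -(ler_pM2r Cgt0) mul0r mulrBl mulfVK ?gt_eqF //.
  by rewrite subr_ge0.
rewrite -(ger0_norm (ltW Bgt0)) -sqrtr_sqr !hnormE -sqrtrM ?qn_ge0 //.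
exact: ler_wsqrtr.
Qed.

Lemma hnormD u v : hnorm ip (u + v) <= hnorm ip u + hnorm ip v.
Proof.
rewrite [leLHS]hnormE -(ger0_norm (addr_ge0 (hnorm_ge0 u) (hnorm_ge0 v))).
rewrite -sqrtr_sqr; apply: ler_wsqrtr.
rewrite qnD sqrrD !hnorm_sq -addrA -[X in _ <= X]addrA lerD2l [X in _ <= X]addrC lerD2l.
have := cs_re u v; rewrite mulr2n; lra.
Qed.

End Hil.
Section GridS.
Variable R : realType.

Lemma cnD (a b : R[i]) : cn (a + b) <= cn a + cn b.
Proof. by rewrite -lecR rmorphD /= -!normE ler_normD. Qed.

Lemma cnB (a b : R[i]) : cn (a - b) = cn (b - a).
Proof. by apply: complexI; rewrite -!normE distrC. Qed.

Lemma divc_real (x y k : R) : k != 0 ->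
  ((x +i* y)%C : R[i]) / k%:C = ((x / k) +i* (y / k))%C.
Proof.
move=> k0; have kc0 : k%:C != 0 :> R[i] by apply/eqP => -[]; apply/eqP.
apply: (mulIf kc0); rewrite divfK //. simpc. rewrite /= !divfK //.
Qed.

Lemma grid_pt (z : R[i]) (N : nat) : (0 < N)%N -> cn z + 2 <= N%:R ->
  exists w : CC R, Grid N w /\ cn (z - w) <= 2 / N%:R.
Proof.
move=> N0 hN.
have Nr0 : (N%:R : R) != 0 by rewrite pnatr_eq0 -lt0n.
have Ngt0 : (0 : R) < N%:R by rewrite ltr0n.
set a := Num.floor (N%:R * complex.Re z).
set b := Num.floor (N%:R * complex.Im z).
have ha := floor_itv (N%:R * complex.Re z); rewrite -/a in ha.
have hb := floor_itv (N%:R * complex.Im z); rewrite -/b in hb.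
clearbody a b.
have wE : ((a%:~R +i* b%:~R)%C : R[i]) / N%:R = ((a%:~R / N%:R) +i* (b%:~R / N%:R))%C.
  have -> : (N%:R : R[i]) = (N%:R : R)%:C by rewrite rmorph_nat.
  exact: divc_real.
have hd : cn (z - ((a%:~R / N%:R) +i* (b%:~R / N%:R))%C) <= 2 / N%:R.
  rewrite /cn; case: z hN ha hb wE => [x y] /= hN ha hb wE.
  set d1 := x - a%:~R / N%:R; set d2 := y - b%:~R / N%:R.
  have hd1 : 0 <= d1 <= N%:R^-1.
    move: ha; rewrite /d1 intrD => /andP [h1 h2].
    apply/andP; split.
      by rewrite subr_ge0 ler_pdivrMr // mulrC.
    rewrite -(ler_pM2l Ngt0) mulrBr mulrCA mulfV // mulr1.
    move: h2; rewrite (_ : 1%:~R = 1 :> R) //; lra.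
  have hd2 : 0 <= d2 <= N%:R^-1.
    move: hb; rewrite /d2 intrD => /andP [h1 h2].
    apply/andP; split.
      by rewrite subr_ge0 ler_pdivrMr // mulrC.
    rewrite -(ler_pM2l Ngt0) mulrBr mulrCA mulfV // mulr1.
    move: h2; rewrite (_ : 1%:~R = 1 :> R) //; lra.
  rewrite -[X in _ <= X]ger0_norm ?divr_ge0 ?ler0n // -sqrtr_sqr.
  apply: ler_wsqrtr.
  move: hd1 hd2 => /andP [h1 h2] /andP [h3 h4].
  have hi : 0 <= N%:R^-1 :> R by rewrite invr_ge0 ler0n.
  have e1 : d1 ^+ 2 <= N%:R^-1 ^+ 2 by rewrite ler_pXn2r // nnegrE.
  have e2 : d2 ^+ 2 <= N%:R^-1 ^+ 2 by rewrite ler_pXn2r // nnegrE.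
  have : (2 / N%:R) ^+ 2 = 4 * N%:R^-1 ^+ 2 :> R by rewrite exprMn; congr (_ * _); rewrite -natrX.
  move=> ->; have := sqr_ge0 (N%:R^-1 : R); lra.
exists (((a%:~R +i* b%:~R)%C : R[i]) / N%:R); split; last by rewrite wE.
exists a, b; split => //.
rewrite normE wE.
have -> : (N%:R : R[i]) = (N%:R : R)%:C by rewrite rmorph_nat.
rewrite lecR.
have := cnD z (((a%:~R / N%:R) +i* (b%:~R / N%:R))%C - z).
rewrite addrC subrK cnB => h; apply: (le_trans h).
apply: le_trans hN; rewrite lerD2l; apply: (le_trans hd).
rewrite ler_pdivrMr // ler_peMr //; by rewrite ler1n.
Qed.
End GridS.
Section Est.
Variable R : realType.
Variable H : lmodType R[i].
Variable ip : H -> H -> R[i].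
Hypothesis hip : is_inner_product ip.

Lemma chainB (x y z : H) : (x - y) + (y - z) = x - z.
Proof. by rewrite addrA subrK. Qed.

Lemma est (K : H -> H) (z w : R[i]) g v :
  hnorm ip (K v - w *: v) <= hnorm ip (K g - z *: g) + hnorm ip (K v - K g)
     + cn z * hnorm ip (v - g) + cn (z - w) * hnorm ip v.
Proof.
have e : K v - w *: v = (K g - z *: g) + (K v - K g) + (z *: g - z *: v) + (z *: v - w *: v).
  by rewrite [_ + (K v - K g)]addrC !chainB.
rewrite e; apply: (le_trans (hnormD hip _ _)); apply: lerD; last first.
  by rewrite -scalerBl (hnormZ hip).
apply: (le_trans (hnormD hip _ _)); apply: lerD; last first.
  by rewrite -scalerBr (hnormZ hip) (hnormB hip).
exact: hnormD.
Qed.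
End Est.
Section Sig.
Variable R : realType.
Variable H : lmodType R[i].
Variable ip : H -> H -> R[i].

Lemma sig_ub (D : set H) (T : H -> H) g : D g -> g <> 0 ->
  (sigma_inf ip D T <= (hnorm ip (T g) / hnorm ip g)%:E)%E.
Proof. by move=> Dg g0; apply: ereal_inf_lbound; exists g. Qed.

Lemma sig_lt (D : set H) (T : H -> H) (x : R) : (sigma_inf ip D T < x%:E)%E ->
  exists g, [/\ D g, g <> 0 & hnorm ip (T g) / hnorm ip g < x].
Proof.
by move=> /ereal_inf_lt [y [g [Dg g0] <-]]; rewrite lte_fin => h; exists g.
Qed.

Lemma sig_mono (D D' : set H) (T : H -> H) : D' `<=` D ->
  (sigma_inf ip D T <= sigma_inf ip D' T)%E.
Proof.
move=> sub; apply: ereal_inf_le_tmp => y [g [Dg g0] <-]; exists g => //.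
by split => //; apply: sub.
Qed.

Lemma span_Vn (f : nat -> H) v : span_fam f v ->
  exists n, forall N, (n <= N)%N -> Vn f N v.
Proof.
move=> [n [c ->]]; exists n => N nN.
exists (fun j => if (j < n)%N then c j else 0).
rewrite (big_ord_widen N (fun j => c j *: f j) nN) big_mkcond /=.
by apply: eq_bigr => i _; case: ifP => //; rewrite scale0r.
Qed.

Lemma Vn_span (f : nat -> H) N : Vn f N `<=` span_fam f.
Proof. by move=> v [c ->]; exists N, c. Qed.
End Sig.
Section Rin.
Variable R : realType.
Lemma real_ineq (eps r rho a b hv Z s m : R) :
  0 < rho -> 0 <= a -> 0 <= b -> 0 <= Z -> 0 <= s -> 0 <= r -> r < eps ->
  a + b < (eps - r) * rho / (2 * (1 + Z + eps)) ->
  rho - a <= hv -> s <= (eps - r) / 8 -> 0 <= m -> m <= 2 * s ->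
  r * rho + b + Z * a + m * hv <= (eps - s) * hv.
Proof.
move=> rho0 a0 b0 Z0 s0 r0 reps hab hv1 hs m0 m2.
have T0 : 0 < 2 * (1 + Z + eps) by lra.
have h1 : (a + b) * (2 * (1 + Z + eps)) <= (eps - r) * rho.
  by rewrite -ler_pdivlMr //; apply: ltW.
have h2 : b + Z * a + eps * a <= (eps - r) * rho / 2 by nra.
have hv0 : 0 <= hv.
  have : a <= (eps - r) * rho / 2 by nra.
  nra.
have h3 : m * hv <= 2 * s * hv by nra.
have h4 : (eps - 3 * s) * (rho - a) <= (eps - 3 * s) * hv by nra.
have h5 : s * rho <= (eps - r) / 8 * rho by nra.
nra.
Qed.
End Rin.
Section Main.
Variables (R : realType) (X : Type) (H : lmodType R[i]) (ip : H -> H -> R[i])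
  (ev : H -> X -> R[i]) (kf : X -> H).
Hypothesis hH : is_RKHS ip ev kf.
Variables (F : X -> X) (xs : nat -> X).
Hypothesis hcoreK : is_core ip (span_fam (kf \o xs)) (koop_dom ev F) (koop ev F).
Variables (eps : R).
Hypothesis heps : 0 < eps.

Let hip := rkhs_ip hH.

Lemma local_approx (c : CC R) (d : R) : 0 < d -> Sp_ap ip ev F eps c ->
  exists N1, forall N, (N1 <= N)%N -> forall x : CC R, `|c - x| < (d / 3)%:C ->
    exists2 w, Gamma_hat ip ev kf F xs eps N w & `|x - w| < d%:C.
Proof.
move=> d0 hc.
have d30 : 0 < d / 3 by rewrite divr_gt0.
have := hc (ball c (d / 3)%:C) (nbhsx_ballx _ _ _).
rewrite ltcR => /(_ d30) [z [/sig_lt [g [Dg g0 hr]] hcz]].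
move: hcz; rewrite /ball /= => hcz.
set r := hnorm ip (koop_shift ev F z g) / hnorm ip g in hr.
set rho := hnorm ip g.
have rho0 : 0 < rho by apply: hnorm_gt0.
have r0 : 0 <= r by rewrite divr_ge0 // hnorm_ge0.
set T := 2 * (1 + cn z + eps).
have T0 : 0 < T by have := cn_ge0 z; rewrite /T; lra.
set tau := (eps - r) * rho / T.
have tau0 : 0 < tau by rewrite /tau divr_gt0 // mulr_gt0 // subr_gt0.
have [v [sv hv]] := hcoreK.2 g Dg tau tau0.
have [n hn] := span_Vn sv.
have Dv : koop_dom ev F v := hcoreK.1 v sv.
pose N1 := maxn n (maxn (Num.Def.archi_bound (cn z + 2))
   (maxn (Num.Def.archi_bound (8 / (eps - r))) (maxn (Num.Def.archi_bound (6 / d)) 1))).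
exists N1 => N hN x hx.
have hNn : (n <= N)%N by apply: leq_trans hN; rewrite leq_maxl.
have hN2 : (Num.Def.archi_bound (cn z + 2) <= N)%N.
  by apply: leq_trans hN; rewrite /N1 !leq_max leqnn ?orbT.
have hN3 : (Num.Def.archi_bound (8 / (eps - r)) <= N)%N.
  by apply: leq_trans hN; rewrite /N1 !leq_max leqnn ?orbT.
have hN4 : (Num.Def.archi_bound (6 / d) <= N)%N.
  by apply: leq_trans hN; rewrite /N1 !leq_max leqnn ?orbT.
have hN0 : (0 < N)%N.
  by apply: leq_trans hN; rewrite /N1 !leq_max leqnn ?orbT.
have arch (y : R) (y0 : 0 <= y) : (Num.Def.archi_bound y <= N)%N -> y < N%:R.
  by move=> h; apply: (lt_le_trans (archi_boundP y0)); rewrite ler_nat.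
have Ngt0 : (0 : R) < N%:R by rewrite ltr0n.
have eta0 : 0 < eps - r by rewrite subr_gt0.
have hz2 : cn z + 2 <= N%:R.
  by apply: ltW; apply: arch => //; have := cn_ge0 z; lra.
have hs : N%:R^-1 <= (eps - r) / 8.
  have := arch (8 / (eps - r)) (ltW (divr_gt0 (ltr0n _ 8) eta0)) hN3.
  rewrite ltr_pdivrMr // => h.
  rewrite ler_pdivlMr // mulrC ler_pdivrMr //; lra.
have hs2 : 2 / N%:R <= d / 3.
  have := arch (6 / d) (ltW (divr_gt0 (ltr0n _ 6) d0)) hN4.
  rewrite ltr_pdivrMr // => h.
  rewrite ler_pdivlMr // mulrC mulrA ler_pdivrMr //; lra.
have [w [gw hzw]] := grid_pt hN0 hz2.
set a := hnorm ip (v - g) in hv.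
set b := hnorm ip (koop ev F v - koop ev F g) in hv.
have a0 : 0 <= a := hnorm_ge0 _ _.
have b0 : 0 <= b := hnorm_ge0 _ _.
have hv1 : rho - a <= hnorm ip v.
  have := hnormD hip v (g - v); rewrite addrC subrK (hnormB hip g v) -/a -/rho.
  lra.
have taurho : tau < rho.
  rewrite /tau ltr_pdivrMr // mulrC ltr_pM2l // /T.
  have := cn_ge0 z; lra.
have vn0 : v <> 0.
  have ar : a < rho by lra.
  move=> v0; have h0 : hnorm ip v = 0 by rewrite v0 hnorm0.
  rewrite h0 in hv1; lra.
have hv0 : 0 < hnorm ip v by apply: hnorm_gt0.
exists w.
  split => //.
  apply: (le_trans (leeD2r _ (sig_ub ip (koop_shift ev F w) (conj (hn N hNn) Dv) vn0))).
  rewrite -EFinD lee_fin -lerBrDr ler_pdivrMr //.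
  apply: (le_trans (est hip (koop ev F) z w g v)).
  have -> : hnorm ip (koop ev F g - z *: g) = r * rho.
    by rewrite /r /koop_shift /rho divfK // gt_eqF.
  by apply: real_ineq => //; exact: cn_ge0.
have hzw' : `|z - w| <= (d / 3)%:C.
  by rewrite normE lecR; apply: le_trans hs2.
have e3 : d%:C = (d / 3)%:C + (d / 3)%:C + (d / 3)%:C :> R[i].
  by rewrite -!rmorphD /=; congr (_%:C); lra.
have -> : x - w = (x - c) + (c - z) + (z - w) by rewrite !chainB.
rewrite e3; apply: (le_lt_trans (ler_normD _ _)); apply: ltr_leD => //.
apply: (le_lt_trans (ler_normD _ _)); apply: ltr_leD; last exact: ltW.
by rewrite distrC.
Qed.

Lemma part1 N : (0 < N)%N -> Gamma_hat ip ev kf F xs eps N `<=`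
  [set z | (sigma_inf ip (koop_dom ev F) (koop_shift ev F z) < eps%:E)%E].
Proof.
move=> N0 z [_ h] /=.
have sub : Vn (kf \o xs) N `&` koop_dom ev F `<=` koop_dom ev F by move=> ? [].
apply: (le_lt_trans (sig_mono ip (koop_shift ev F z) sub)).
have Ngt0 : (0 : R) < N%:R^-1 by rewrite invr_gt0 ltr0n.
move: h; case: (sigma_inf _ _ _) => [x| |] //=.
rewrite -EFinD !lee_fin lte_fin => h; lra.
Qed.

Lemma main_sec : (forall N : nat, (0 < N)%N ->
     Gamma_hat ip ev kf F xs eps N `<=` Sp_ap ip ev F eps) /\
  AW_conv (Gamma_hat ip ev kf F xs eps) (Sp_ap ip ev F eps).
Proof.
have P1 : forall N : nat, (0 < N)%N ->
     Gamma_hat ip ev kf F xs eps N `<=` Sp_ap ip ev F eps.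
  by move=> N N0 z gz; apply: subset_closure; apply: part1 N0 z gz.
split => //; split.
  move=> C0 m; exists 1%N => n n1; apply/seteqP; split => // z [gz _].
  by have := P1 n n1 z gz; rewrite C0.
move=> Cn0 d K d0 cK.
have cKC : compact (K `&` Sp_ap ip ev F eps) := compact_closedI cK (@closed_closure _ _).
have loc : forall x, (K `&` Sp_ap ip ev F eps) x ->
  \forall x' \near x & i \near \oo,
    (exists2 w : CC R, Gamma_hat ip ev kf F xs eps i w & `|x' - w| < d%:C).
  move=> c [_ Cc]; have [N1 hN1] := local_approx d0 Cc.
  have d30 : (0 : R[i]) < (d / 3)%:C by rewrite ltcR divr_gt0.
  exists (ball c (d / 3)%:C, [set N | (N1 <= N)%N]).
    split; first exact: nbhsx_ballx.
    by exists N1.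
  move=> [x N] /= [hx hN]; exact: hN1.
have := (compact_near_coveringP _).1 cKC nat \oo
  (fun N x => exists2 w, Gamma_hat ip ev kf F xs eps N w & `|x - w| < d%:C) _ loc.
move=> /(_ _) [n0 _ hn].
exists (maxn n0 1) => n hn1.
have n0n : (n0 <= n)%N by apply: leq_trans hn1; rewrite leq_maxl.
have n1 : (0 < n)%N by apply: leq_trans hn1; rewrite leq_maxr.
split.
  move=> w [gw Kw]; exists w; first exact: P1 n1 w gw.
  by rewrite subrr normr0 ltcR.
move=> w [Cw Kw]; exact: hn n n0n w (conj Kw Cw).
Qed.
End Main.

Theorem mainTheorem7 (R : realType) (X : Type) (H : lmodType R[i])
  (ip : H -> H -> R[i]) (ev : H -> X -> R[i]) (kf : X -> H)
  (hH : is_RKHS ip ev kf) (F : X -> X) (xs : nat -> X)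
  (hdense : dense_in_H ip (koop_dom ev F))
  (hcoreK : is_core ip (span_fam (kf \o xs)) (koop_dom ev F) (koop ev F))
  (hcoreKs : is_core ip (span_fam (kf \o xs))
                (koop_adj_dom ip ev F) (koop_adj ip ev F))
  (eps : R) (heps : 0 < eps) :
  (forall N : nat, (0 < N)%N ->
     Gamma_hat ip ev kf F xs eps N `<=` Sp_ap ip ev F eps) /\
  AW_conv (Gamma_hat ip ev kf F xs eps) (Sp_ap ip ev F eps).
Proof. exact: (main_sec hH hcoreK eps). Qed.
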